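(* (Compactness Extrapolation Lemma.) Fix a dimension $d\geq1$ and real numbers $s_0<s_1$. Let $(u^\varepsilon)_{\varepsilon\in(0,1]}$ be a family of functions bounded in $\dot H^{s_0}\cap\dot H^{s_1}(\mathbb{R}^d)$ uniformly in $\varepsilon\in(0,1]$, and assume $u^\varepsilon\to u$ in $\dot H^{s_0}(\mathbb{R}^d)$ as $\varepsilon\to0$. Then $u^\varepsilon\to u$ in $\dot H^{s_1}(\mathbb{R}^d)$ if and only if $$\lim_{\varepsilon\to0}\|\mathds{1}_{|D|\geq\Theta_\varepsilon}u^\varepsilon\|_{\dot H^{s_1}}=0$$ for some $\Theta_\varepsilon>0$ satisfying $$\lim_{\varepsilon\to0}\Theta_\varepsilon=\infty\quad\text{and}\quad\lim_{\varepsilon\to0}\Theta_\varepsilon^{s_1-s_0}\|u^\varepsilon-u\|_{\dot H^{s_0}}=0.$$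
   Context: $\dot H^s(\mathbb{R}^d)$ denotes the homogeneous Sobolev space with norm $\||D|^s f\|_{L^2}$. For a bounded function $m$, $m(D)f=\mathcal{F}^{-1}(m(\xi)\mathcal{F}f(\xi))$; in particular $\mathds{1}_{|D|\geq\Theta}$ is the Fourier multiplier by the indicator of $\{|\xi|\geq\Theta\}$. *)

(* Defs.v *)
From HB Require Import structures.
From mathcomp Require Import all_boot all_order all_algebra.
From mathcomp Require Import all_classical all_reals all_analysis.
Set Implicit Arguments. Unset Strict Implicit. Unset Printing Implicit Defensive.
Import Order.TTheory GRing.Theory Num.Theory.
Import numFieldNormedType.Exports.
Local Open Scope classical_set_scope.
Local Open Scope ring_scope.

Record mspace (R : realType) := MSpace {
  ms_disp : measure_display;
  ms_car : measurableType ms_disp;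
  ms_mu : {measure set ms_car -> \bar R} }.

(* Rd_aux n models R^(n+1) = R * R * ... * R (left-nested pairs), equipped with
   the Lebesgue measure built as iterated product measure
   (lebesgue_measure on R, then  mu_n \x lebesgue_measure). *)
Fixpoint Rd_aux (R : realType) (n : nat) : mspace R :=
  match n with
  | 0 => @MSpace R _ (measurableTypeR R)
           (lebesgue_measure : {measure set (measurableTypeR R) -> \bar R})
  | n'.+1 => let X := Rd_aux R n' in
      @MSpace R _ (ms_car X * measurableTypeR R)%type
        (((ms_mu X) \x (lebesgue_measure : {measure set (measurableTypeR R) -> \bar R}))%E
           : {measure set (ms_car X * measurableTypeR R)%type -> \bar R})
  end.

Fixpoint sqnorm_aux (R : realType) (n : nat) : ms_car (Rd_aux R n) -> R :=
  match n return ms_car (Rd_aux R n) -> R with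
  | 0 => fun x => x ^+ 2
  | n'.+1 => fun x => sqnorm_aux x.1 + x.2 ^+ 2
  end.

(* R^d for d >= 1 (the value at d = 0 is irrelevant: the theorem assumes d >= 1). *)
Definition Rd (R : realType) (d : nat) : mspace R := Rd_aux R d.-1.
Definition Rdt (R : realType) (d : nat) : Type := ms_car (Rd R d).
Definition leb_d (R : realType) (d : nat) := ms_mu (Rd R d).

Definition eucl (R : realType) (d : nat) (xi : Rdt R d) : R :=
  Num.sqrt (@sqnorm_aux R d.-1 xi).

(* Functions are represented through their Fourier transforms,
   complex-valued functions on R^d encoded as (real part, imaginary part). *)
Definition fou (R : realType) (d : nat) := Rdt R d -> (R * R)%type.

Definition cabs (R : realType) (z : R * R) : R := Num.sqrt (z.1 ^+ 2 + z.2 ^+ 2).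

Definition fsub (R : realType) (d : nat) (f g : fou R d) : fou R d :=
  fun xi => (f xi - g xi)%R.

(* Homogeneous Sobolev norm || |D|^s f ||_{L^2} computed on the Fourier side
   (Plancherel): the L^2 norm of  xi |-> |xi|^s |\hat f(xi)|. *)
Definition Hnorm (R : realType) (d : nat) (s : R) (fh : fou R d) : \bar R :=
  Lnorm (leb_d R d) 2%:E (fun xi => ((eucl xi) `^ s * cabs (fh xi))%:E).

Definition inHdot (R : realType) (d : nat) (s : R) (fh : fou R d) : Prop :=
  measurable_fun [set: Rdt R d] (fun xi => (fh xi).1) /\
  measurable_fun [set: Rdt R d] (fun xi => (fh xi).2) /\
  (Hnorm s fh < +oo)%E.

Definition hicut (R : realType) (d : nat) (Theta : R) (fh : fou R d) : fou R d :=
  fun xi => if Theta <= eucl xi then fh xi else 0.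

(* Main.v *)
Require Import Defs.
From HB Require Import structures.
From mathcomp Require Import all_boot all_order all_algebra.
From mathcomp Require Import all_classical all_reals all_analysis.
From mathcomp Require Import measurable_realfun.
From mathcomp Require Import ring lra.
Import Order.TTheory GRing.Theory Num.Theory.
Import numFieldNormedType.Exports.
Local Open Scope classical_set_scope.
Local Open Scope ring_scope.
Set Implicit Arguments. Unset Strict Implicit. Unset Printing Implicit Defensive.

Section S1.
Context (R : realType).

Lemma sqnorm_ge0 n (x : ms_car (Rd_aux R n)) : 0 <= sqnorm_aux x.
Proof.
elim: n x => [|n IH] x /=; first exact: sqr_ge0.
by rewrite addr_ge0 ?sqr_ge0.
Qed.

Lemma meas_sqnorm n : measurable_fun [set: ms_car (Rd_aux R n)] (@sqnorm_aux R n).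
Proof.
elim: n => [|n IH] /=.
  exact: exprn_measurable.
apply: measurable_funD.
  exact: (measurableT_comp IH measurable_fst).
by apply: measurable_funX; exact: measurable_snd.
Qed.

Definition Znull n : set (ms_car (Rd_aux R n)) :=
  match n with
  | 0 => [set 0]
  | n'.+1 => [set: ms_car (Rd_aux R n')] `*` [set 0]
  end.
Arguments Znull : clear implicits.

Lemma Znull_meas n : measurable (Znull n).
Proof.
case: n => [|n] /=; first exact: measurable_set1.
apply: measurableX => //; exact: measurable_set1.
Qed.

Lemma Znull_mu0 n : ms_mu (Rd_aux R n) (Znull n) = 0%E.
Proof.
case: n => [|n] /=; first exact: lebesgue_measure_set1.
rewrite product_measure1E; [|done|exact: measurable_set1].
by rewrite [X in (_ * X)%E](_ : _ = 0%E) ?mule0 //; exact: lebesgue_measure_set1.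
Qed.

Lemma Znull_sub n (x : ms_car (Rd_aux R n)) : sqnorm_aux x = 0 -> Znull n x.
Proof.
case: n x => [|n] x /=.
  by move/eqP; rewrite sqrf_eq0 => /eqP.
move=> h; split => //=.
have h1 := @sqnorm_ge0 n x.1; have h2 := sqr_ge0 x.2.
have : x.2 ^+ 2 = 0.
  apply/eqP; rewrite eq_le sqr_ge0 andbT.
  by rewrite -h lerDr.
by move/eqP; rewrite sqrf_eq0 => /eqP.
Qed.

Lemma meas_eucl d : measurable_fun [set: Rdt R d] (@eucl R d).
Proof.
apply: (measurableT_comp (continuous_measurable_fun (@sqrt_continuous R))).
exact: meas_sqnorm.
Qed.

Lemma eucl_ge0 d (x : Rdt R d) : 0 <= eucl x.
Proof. exact: sqrtr_ge0. Qed.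

Lemma ae_eucl_pos d : {ae (leb_d R d), forall x : Rdt R d, 0 < eucl x}.
Proof.
exists (Znull d.-1); split; [exact: Znull_meas|exact: Znull_mu0|].
move=> x /= hx; apply: Znull_sub.
have : eucl x = 0.
  by apply/eqP; rewrite eq_le eucl_ge0 andbT leNgt; apply/negP.
rewrite /eucl => /eqP; rewrite sqrtr_eq0 => h.
by apply/eqP; rewrite eq_le h sqnorm_ge0.
Qed.

Definition mfou d (f : fou R d) :=
  measurable_fun [set: Rdt R d] (fun x => (f x).1) /\
  measurable_fun [set: Rdt R d] (fun x => (f x).2).

Lemma mfou_sub d (f g : fou R d) : mfou f -> mfou g -> mfou (fsub f g).
Proof.
by move=> [f1 f2] [g1 g2]; split; rewrite /fsub /=; apply: measurable_funB.
Qed.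

Lemma mfou_hicut d t (f : fou R d) : mfou f -> mfou (hicut t f).
Proof.
move=> [f1 f2]; rewrite /hicut; split.
- rewrite (_ : (fun x => _) = (fun x => if t <= eucl x then (f x).1 else 0)); last first.
    by apply: funext => x; case: ifP.
  apply: measurable_fun_ifT => //.
  apply: measurable_fun_ler => //; exact: meas_eucl.
- rewrite (_ : (fun x => _) = (fun x => if t <= eucl x then (f x).2 else 0)); last first.
    by apply: funext => x; case: ifP.
  apply: measurable_fun_ifT => //.
  apply: measurable_fun_ler => //; exact: meas_eucl.
Qed.

Definition Gs d (s : R) (f : fou R d) (x : Rdt R d) : R := eucl x `^ s * cabs (f x).

Definition J d (s : R) (f : fou R d) : \bar R :=
  (\int[leb_d R d]_x ((Gs s f x) ^+ 2)%:E)%E.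

Lemma cabs_sqr (z : R * R) : cabs z ^+ 2 = z.1 ^+ 2 + z.2 ^+ 2.
Proof. by rewrite /cabs sqr_sqrtr // addr_ge0 ?sqr_ge0. Qed.

Lemma Gs_sqr d s (f : fou R d) x :
  Gs s f x ^+ 2 = (eucl x `^ s) ^+ 2 * ((f x).1 ^+ 2 + (f x).2 ^+ 2).
Proof. by rewrite /Gs exprMn cabs_sqr. Qed.

Lemma Gs_ge0 d s (f : fou R d) x : 0 <= Gs s f x.
Proof. by rewrite /Gs mulr_ge0 ?powR_ge0 ?sqrtr_ge0. Qed.

Lemma meas_G2 d s (f : fou R d) : mfou f ->
  measurable_fun [set: Rdt R d] (fun x => ((Gs s f x) ^+ 2)%:E).
Proof.
move=> [f1 f2]; apply/measurable_EFinP; apply: measurable_funX.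
apply: measurable_funM.
  apply: (measurableT_comp (f := fun r : R => r `^ s) (g := @eucl R d)); last exact: meas_eucl.
  exact: measurable_powR.
apply: (measurableT_comp (continuous_measurable_fun (@sqrt_continuous R))).
by apply: measurable_funD; apply: measurable_funX.
Qed.

Lemma J_ge0 d s (f : fou R d) : (0 <= J s f)%E.
Proof. by apply: integral_ge0 => x _; rewrite lee_fin sqr_ge0. Qed.

Lemma Hnorm_J d s (f : fou R d) : (Hnorm s f `^ 2 = J s f)%E.
Proof.
rewrite /Hnorm poweR_Lnorm //; apply: eq_integral => x _.
rewrite poweR_EFin /= ger0_norm ?Gs_ge0 //.
by rewrite -[2]/(2%:R) powR_mulrn ?Gs_ge0.
Qed.


Lemma cvge0P {T} {F : set_system T} {FF : Filter F} (x : T -> \bar R) :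
  (forall t, 0 <= x t)%E ->
  x @ F --> 0%E <-> (forall eps, 0 < eps -> \forall t \near F, (x t <= eps%:E)%E).
Proof.
move=> x0; split.
  move/fine_cvgP => [fin c] eps ep.
  move/cvgr0Pnorm_le : c => /(_ eps ep) c.
  apply: filterS2 fin c => t ft ct.
  by rewrite -(fineK ft) lee_fin; exact: le_trans (ler_norm _) ct.
move=> h; apply/fine_cvgP; split.
  apply: filterS (h 1 ltr01) => t xt.
  rewrite fin_numElt (lt_le_trans _ (x0 t)) ?ltNye //=.
  exact: le_lt_trans xt (ltry _).
apply/cvgr0Pnorm_le => eps ep; apply: filterS (h eps ep) => t xt /=.
move: (x0 t) xt; case: (x t) => [r| |] //=; rewrite !lee_fin => r0 re.
by rewrite ger0_norm.
Qed.

Lemma sq_le_equiv (h : \bar R) (eps : R) : (0 <= h)%E -> 0 <= eps ->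
  (h <= eps%:E)%E <-> (h `^ 2 <= (eps ^+ 2)%:E)%E.
Proof.
case: h => [r| |] //; rewrite ?lee_fin => r0 e0.
  rewrite -[2]/(2%:R) powR_mulrn //.
  by split => h; nra.
by rewrite poweRyr //; split => //; rewrite leye_eq.
Qed.

Lemma prod_le_equiv (c : R) (h : \bar R) (eps : R) : 0 <= c -> (0 <= h)%E -> 0 <= eps ->
  (c%:E * h <= eps%:E)%E <-> ((c ^+ 2)%:E * h `^ 2 <= (eps ^+ 2)%:E)%E.
Proof.
move=> c0; case: h => [r| |] //; rewrite ?lee_fin => r0 e0.
  rewrite -[2]/(2%:R) powR_mulrn // -exprMn.
  have hcr : 0 <= c * r by exact: mulr_ge0.
  by split => h; nra.
rewrite poweRyr //; have [->|cp] := eqVneq c 0.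
  by rewrite expr0n /= !mul0e !lee_fin sqr_ge0.
have c0' : 0 < c by rewrite lt_def cp c0.
rewrite !(muleC _ +oo%E) !gt0_mulye ?lte_fin ?exprn_gt0 //.
Qed.


Definition locut d (t : R) (f : fou R d) : fou R d :=
  fun xi => if eucl xi < t then f xi else 0.

Lemma mfou_locut d t (f : fou R d) : mfou f -> mfou (locut t f).
Proof.
move=> [f1 f2]; rewrite /locut; split.
- rewrite (_ : (fun x => _) = (fun x => if eucl x < t then (f x).1 else 0)); last first.
    by apply: funext => x; case: ifP.
  apply: measurable_fun_ifT => //.
  apply: measurable_fun_ltr => //; exact: meas_eucl.
- rewrite (_ : (fun x => _) = (fun x => if eucl x < t then (f x).2 else 0)); last first.
    by apply: funext => x; case: ifP.
  apply: measurable_fun_ifT => //.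
  apply: measurable_fun_ltr => //; exact: meas_eucl.
Qed.

Lemma cabs0 : cabs (0 : R * R) = 0.
Proof. by rewrite /cabs /= expr0n /= addr0 sqrtr0. Qed.

Lemma G_hicut d s t (f : fou R d) x :
  Gs s (hicut t f) x ^+ 2 = if t <= eucl x then Gs s f x ^+ 2 else 0.
Proof. by rewrite /Gs /hicut; case: ifP => // _; rewrite cabs0 mulr0 expr0n. Qed.

Lemma G_locut d s t (f : fou R d) x :
  Gs s (locut t f) x ^+ 2 = if eucl x < t then Gs s f x ^+ 2 else 0.
Proof. by rewrite /Gs /locut; case: ifP => // _; rewrite cabs0 mulr0 expr0n. Qed.

Lemma G_sub1 d s (f g : fou R d) x :
  Gs s (fsub f g) x ^+ 2 <= 2 * Gs s f x ^+ 2 + 2 * Gs s g x ^+ 2.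
Proof.
rewrite !Gs_sqr /fsub /=.
set w := (eucl x `^ s) ^+ 2.
have w0 : 0 <= w by exact: sqr_ge0.
set a1 := (f x).1; set a2 := (f x).2; set b1 := (g x).1; set b2 := (g x).2.
have h : (a1 - b1) ^+ 2 + (a2 - b2) ^+ 2 <= 2 * (a1 ^+ 2 + a2 ^+ 2) + 2 * (b1 ^+ 2 + b2 ^+ 2).
  have := sqr_ge0 (a1 + b1); have := sqr_ge0 (a2 + b2); nra.
apply: (le_trans (ler_wpM2l w0 h)).
by rewrite le_eqVlt; apply/orP; left; apply/eqP; ring.
Qed.

Lemma G_sub2 d s (f g : fou R d) x :
  Gs s f x ^+ 2 <= 2 * Gs s (fsub f g) x ^+ 2 + 2 * Gs s g x ^+ 2.
Proof.
rewrite !Gs_sqr /fsub /=.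
set w := (eucl x `^ s) ^+ 2.
have w0 : 0 <= w by exact: sqr_ge0.
set a1 := (f x).1; set a2 := (f x).2; set b1 := (g x).1; set b2 := (g x).2.
have h : a1 ^+ 2 + a2 ^+ 2 <= 2 * ((a1 - b1) ^+ 2 + (a2 - b2) ^+ 2) + 2 * (b1 ^+ 2 + b2 ^+ 2).
  have := sqr_ge0 (a1 - 2 * b1); have := sqr_ge0 (a2 - 2 * b2); nra.
apply: (le_trans (ler_wpM2l w0 h)).
by rewrite le_eqVlt; apply/orP; left; apply/eqP; ring.
Qed.

Lemma G_sub3 d s (f g : fou R d) x :
  Gs s g x ^+ 2 <= 2 * Gs s (fsub f g) x ^+ 2 + 2 * Gs s f x ^+ 2.
Proof.
rewrite !Gs_sqr /fsub /=.
set w := (eucl x `^ s) ^+ 2.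
have w0 : 0 <= w by exact: sqr_ge0.
set a1 := (f x).1; set a2 := (f x).2; set b1 := (g x).1; set b2 := (g x).2.
have h : b1 ^+ 2 + b2 ^+ 2 <= 2 * ((a1 - b1) ^+ 2 + (a2 - b2) ^+ 2) + 2 * (a1 ^+ 2 + a2 ^+ 2).
  have := sqr_ge0 (2 * a1 - b1); have := sqr_ge0 (2 * a2 - b2); nra.
apply: (le_trans (ler_wpM2l w0 h)).
by rewrite le_eqVlt; apply/orP; left; apply/eqP; ring.
Qed.

Lemma G_weight d s0 s1 (f : fou R d) x t : s0 <= s1 -> 0 < eucl x -> eucl x <= t ->
  Gs s1 f x ^+ 2 <= (t `^ (s1 - s0)) ^+ 2 * Gs s0 f x ^+ 2.
Proof.
move=> hs ex xt.
have hw : eucl x `^ s1 <= t `^ (s1 - s0) * eucl x `^ s0.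
  have -> : s1 = (s1 - s0) + s0 by rewrite subrK.
  rewrite addrK powRD; last by apply/implyP => _; rewrite gt_eqF.
  apply: ler_wpM2r; first exact: powR_ge0.
  apply: ge0_ler_powR => //; first by rewrite subr_ge0.
    by rewrite nnegrE ltW.
  by rewrite nnegrE (le_trans (ltW ex)).
rewrite /Gs !exprMn [in X in _ <= X]mulrA; apply: ler_wpM2r; first exact: sqr_ge0.
rewrite -exprMn ler_sqr ?nnegrE ?powR_ge0 ?mulr_ge0 ?powR_ge0 //.
Qed.


Lemma meas_G2R d s (f : fou R d) : mfou f ->
  measurable_fun [set: Rdt R d] (fun x => Gs s f x ^+ 2).
Proof. by move=> mf; apply/measurable_EFinP; exact: meas_G2. Qed.

Lemma int_split d (h1 h2 : Rdt R d -> R) :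
  measurable_fun setT h1 -> measurable_fun setT h2 ->
  (forall x, 0 <= h1 x) -> (forall x, 0 <= h2 x) ->
  (\int[leb_d R d]_x (h1 x + h2 x)%:E = \int[leb_d R d]_x (h1 x)%:E + \int[leb_d R d]_x (h2 x)%:E)%E.
Proof.
move=> m1 m2 p1 p2.
under eq_integral do rewrite EFinD.
apply: ge0_integralD => //.
- by move=> x _; rewrite lee_fin.
- exact/measurable_EFinP.
- by move=> x _; rewrite lee_fin.
- exact/measurable_EFinP.
Qed.

Lemma int_scale d (a : R) (h : Rdt R d -> R) : 0 <= a ->
  measurable_fun setT h -> (forall x, 0 <= h x) ->
  (\int[leb_d R d]_x (a * h x)%:E = a%:E * \int[leb_d R d]_x (h x)%:E)%E.
Proof.
move=> a0 m p.
under eq_integral do rewrite EFinM.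
apply: ge0_integralZl_EFin => //.
- by move=> x _; rewrite lee_fin.
- exact/measurable_EFinP.
Qed.

Lemma J_le3 d sf (f : fou R d) s1 s2 s3 (g1 g2 g3 : fou R d) (a b c : R) :
  0 <= a -> 0 <= b -> 0 <= c -> mfou f -> mfou g1 -> mfou g2 -> mfou g3 ->
  {ae leb_d R d, forall x, Gs sf f x ^+ 2 <=
     a * Gs s1 g1 x ^+ 2 + b * Gs s2 g2 x ^+ 2 + c * Gs s3 g3 x ^+ 2} ->
  (J sf f <= a%:E * J s1 g1 + b%:E * J s2 g2 + c%:E * J s3 g3)%E.
Proof.
move=> a0 b0 c0 mf m1 m2 m3 hae.
have q1 := meas_G2R s1 m1; have q2 := meas_G2R s2 m2; have q3 := meas_G2R s3 m3.
have p1 x : 0 <= Gs s1 g1 x ^+ 2 by exact: sqr_ge0.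
have p2 x : 0 <= Gs s2 g2 x ^+ 2 by exact: sqr_ge0.
have p3 x : 0 <= Gs s3 g3 x ^+ 2 by exact: sqr_ge0.
have ma : measurable_fun setT (fun x => a * Gs s1 g1 x ^+ 2) by apply: measurable_funM.
have mb : measurable_fun setT (fun x => b * Gs s2 g2 x ^+ 2) by apply: measurable_funM.
have mc : measurable_fun setT (fun x => c * Gs s3 g3 x ^+ 2) by apply: measurable_funM.
have pa x : 0 <= a * Gs s1 g1 x ^+ 2 by rewrite mulr_ge0.
have pb x : 0 <= b * Gs s2 g2 x ^+ 2 by rewrite mulr_ge0.
have pc x : 0 <= c * Gs s3 g3 x ^+ 2 by rewrite mulr_ge0.
rewrite /J -(int_scale a0 q1 p1) -(int_scale b0 q2 p2) -(int_scale c0 q3 p3).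
rewrite -int_split // -int_split //; last 2 first.
  - exact: measurable_funD.
  - by move=> x; rewrite addr_ge0.
apply: ae_ge0_le_integral => //.
- by move=> x _; rewrite lee_fin sqr_ge0.
- exact: meas_G2.
- by move=> x _; rewrite lee_fin !addr_ge0.
- apply/measurable_EFinP; apply: measurable_funD => //; exact: measurable_funD.
- by apply: filterS hae => x hx _; rewrite lee_fin.
Qed.


Lemma low_cvg d s (f : fou R d) : mfou f ->
  J s (locut n%:R f) @[n --> \oo] --> J s f.
Proof.
move=> mf; rewrite /J.
pose g := fun (n : nat) x => (Gs s (locut n%:R f) x ^+ 2)%:E.
have mg : forall n, measurable_fun setT (g n).
  by move=> n; apply: meas_G2; exact: mfou_locut.
have g0 : forall n x, setT x -> (0 <= g n x)%E.
  by move=> n x _; rewrite lee_fin sqr_ge0.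
have nd : forall x, setT x -> nondecreasing_seq (g ^~ x).
  move=> x _ m n mn; rewrite /g !G_locut lee_fin.
  have mn' : (m%:R <= n%:R :> R) by rewrite ler_nat.
  case: ifPn => hm; case: ifPn => hn //; rewrite ?sqr_ge0 //.
  by exfalso; move/negP: hn; apply; exact: lt_le_trans hm mn'.
have := @cvg_monotone_convergence _ _ R (leb_d R d) setT measurableT g mg g0 nd.
congr (_ --> _); apply: eq_integral => x _.
apply: lim_near_cst => //.
apply: filterS (nbhs_infty_gtr (eucl x)) => n hn.
by rewrite /g G_locut hn.
Qed.

Lemma low_bound d s (f : fou R d) (K : \bar R) : mfou f ->
  (forall n : nat, J s (locut n%:R f) <= K)%E -> (J s f <= K)%E.
Proof.
move=> mf hK; have c := low_cvg (s:=s) mf.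
rewrite -(cvg_lim _ c) //; apply: lime_le; first exact: cvgP c.
exact: nearW.
Qed.


Lemma tail_small d s (f : fou R d) : mfou f -> (J s f < +oo)%E ->
  forall eps, 0 < eps -> exists M : R, forall t, M <= t -> (J s (hicut t f) <= eps%:E)%E.
Proof.
move=> mf fin eps ep.
have c := low_cvg (s:=s) mf.
have Jfin : J s f \is a fin_num by rewrite ge0_fin_numE // J_ge0.
rewrite -(fineK Jfin) in c.
move/fine_cvgP: c => [_ c].
move/cvgrPdist_le : c => /(_ eps ep) [N _ hN].
exists N%:R => t Nt.
have hN' := hN N (leqnn N).
have split : (J s (hicut N%:R f) + J s (locut N%:R f) = J s f)%E.
  rewrite /J -int_split; last 4 first.
  - exact/meas_G2R/mfou_hicut.
  - exact/meas_G2R/mfou_locut.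
  - by move=> x; exact: sqr_ge0.
  - by move=> x; exact: sqr_ge0.
  apply: eq_integral => x _; rewrite G_hicut G_locut.
  by case: leP => _; rewrite ?addr0 ?add0r.
have mono : (J s (hicut t f) <= J s (hicut N%:R f))%E.
  have := @J_le3 d s (hicut t f) s s s (hicut N%:R f) f f 1 0 0 ler01 (lexx _) (lexx _)
    (mfou_hicut t mf) (mfou_hicut _ mf) mf mf.
  rewrite mul1e !mul0e !adde0; apply.
  apply: nearW => x; rewrite !mul0r !addr0 mul1r !G_hicut.
  case: ifPn => h1; case: ifPn => h2 //; rewrite ?sqr_ge0 //.
  by exfalso; move/negP: h2; apply; exact: le_trans Nt h1.
have A0 := J_ge0 s (hicut N%:R f); have B0 := J_ge0 s (locut N%:R f).
have Afin : J s (hicut N%:R f) \is a fin_num.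
  rewrite ge0_fin_numE //; apply: le_lt_trans fin; rewrite -split.
  by rewrite leeDl.
have Bfin : J s (locut N%:R f) \is a fin_num.
  rewrite ge0_fin_numE //; apply: le_lt_trans fin; rewrite -split.
  by rewrite leeDr.
apply: (le_trans mono); rewrite -(fineK Afin) lee_fin.
move: hN'; rewrite /= -split fineD //.
rewrite addrK => h; apply: le_trans h.
exact: ler_norm.
Qed.


Lemma Hnorm_ge0 d s (f : fou R d) : (0 <= Hnorm s f)%E.
Proof. exact: Lnorm_ge0. Qed.

Lemma HJ_small {T} {F : set_system T} {FF : Filter F} d s (f : T -> fou R d) :
  Hnorm s (f t) @[t --> F] --> 0%E <->
  (forall eps, 0 < eps -> \forall t \near F, (J s (f t) <= eps%:E)%E).
Proof.
rewrite cvge0P; last by move=> t; exact: Hnorm_ge0.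
split => h eps ep.
  apply: filterS (h (Num.sqrt eps) _); last by rewrite sqrtr_gt0.
  move=> t /(sq_le_equiv (Hnorm_ge0 _ _) (sqrtr_ge0 _)).
  by rewrite Hnorm_J sqr_sqrtr // ltW.
apply: filterS (h (eps ^+ 2) _); last by rewrite exprn_gt0.
move=> t ht; apply/(sq_le_equiv (Hnorm_ge0 _ _) (ltW ep)).
by rewrite Hnorm_J.
Qed.

Lemma Prod_small {T} {F : set_system T} {FF : Filter F} d s (c : T -> R) (f : T -> fou R d) :
  (forall t, 0 <= c t) ->
  ((c t)%:E * Hnorm s (f t))%E @[t --> F] --> 0%E <->
  (forall eps, 0 < eps -> \forall t \near F, (((c t) ^+ 2)%:E * J s (f t) <= eps%:E)%E).
Proof.
move=> c0; rewrite cvge0P; last by move=> t; rewrite mule_ge0 ?lee_fin ?Hnorm_ge0.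
split => h eps ep.
  apply: filterS (h (Num.sqrt eps) _); last by rewrite sqrtr_gt0.
  move=> t /(prod_le_equiv (c0 t) (Hnorm_ge0 _ _) (sqrtr_ge0 _)).
  by rewrite Hnorm_J sqr_sqrtr // ltW.
apply: filterS (h (eps ^+ 2) _); last by rewrite exprn_gt0.
move=> t ht; apply/(prod_le_equiv (c0 t) (Hnorm_ge0 _ _) (ltW ep)).
by rewrite Hnorm_J.
Qed.

Lemma emul_le (a X : R) (x : \bar R) : 0 <= a -> (x <= X%:E)%E -> (a%:E * x <= (a * X)%:E)%E.
Proof. by move=> a0 h; rewrite EFinM; apply: lee_wpmul2l. Qed.

Lemma sqrt4_le (r k : R) : 0 <= r -> 0 < k -> r <= k ^+ 4 -> Num.sqrt (Num.sqrt r) <= k.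
Proof.
move=> r0 k0 h.
have h1 : Num.sqrt r <= k ^+ 2.
  rewrite -(ger0_norm (ltW (exprn_gt0 2 k0))) -sqrtr_sqr -exprM.
  by rewrite ler_sqrt // exprn_ge0 // ltW.
rewrite -(ger0_norm (ltW k0)) -sqrtr_sqr.
by rewrite ler_sqrt // sqr_ge0.
Qed.

Lemma key_prod (a e : R) : 0 <= a -> 0 < e ->
  ((Num.sqrt (Num.sqrt (a + e)))^-1) ^+ 2 * a <= Num.sqrt (a + e).
Proof.
move=> a0 e0.
have r0 : 0 < a + e by rewrite ltr_wpDl.
set q := Num.sqrt (a + e).
have q0 : 0 < q by rewrite sqrtr_gt0.
rewrite exprVn (sqr_sqrtr (ltW q0)) mulrC ler_pdivrMr //.
have -> : q * q = a + e by rewrite -expr2 sqr_sqrtr // ltW.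
by rewrite lerDl ltW.
Qed.


Lemma near01 : \forall e \near (0:R)^'+, 0 < e <= 1.
Proof.
apply: filterS2 (nbhs_right_gt 0) (nbhs_right_le ltr01) => e a b.
by rewrite a b.
Qed.

Lemma ae_pos_imp d (P : Rdt R d -> Prop) : (forall x, 0 < eucl x -> P x) ->
  {ae leb_d R d, forall x, P x}.
Proof.
move=> h; case: (ae_eucl_pos d) => N [mN N0 sub]; exists N; split => // x /= nPx.
by apply: sub => /= hx; apply: nPx; exact: h.
Qed.

Lemma ex_near01 (P Q : R -> Prop) : (\forall e \near (0:R)^'+, P e) ->
  (\forall e \near (0:R)^'+, Q e) -> exists e, P e /\ Q e.
Proof.
move=> hP hQ; near (0:R)^'+ => e.
exists e; split; near: e; [exact: hP|exact: hQ].
Unshelve. all: by end_near.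
Qed.

End S1.

Unset Implicit Arguments.

Theorem lemma1p4 (R : realType) (d : nat) (s0 s1 : R)
    (u : R -> fou R d) (v : fou R d) :
  (1 <= d)%N ->
  s0 < s1 ->
  (forall e : R, 0 < e <= 1 -> inHdot s0 (u e) /\ inHdot s1 (u e)) ->
  (exists C : R, forall e : R, 0 < e <= 1 ->
      (Hnorm s0 (u e) <= C%:E)%E /\ (Hnorm s1 (u e) <= C%:E)%E) ->
  inHdot s0 v ->
  Hnorm s0 (fsub (u e) v) @[e --> 0^'+] --> 0%E ->
  (Hnorm s1 (fsub (u e) v) @[e --> 0^'+] --> 0%E
   <->
   exists Theta : R -> R,
     (forall e : R, 0 < e <= 1 -> 0 < Theta e) /\
     Theta e @[e --> 0^'+] --> +oo /\
     (((Theta e) `^ (s1 - s0))%:E * Hnorm s0 (fsub (u e) v))%E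
        @[e --> 0^'+] --> 0%E /\
     Hnorm s1 (hicut (Theta e) (u e)) @[e --> 0^'+] --> 0%E).
Proof.
move=> d1 hs hin [C hC] hv hcv.
have del0 : 0 < s1 - s0 by rewrite subr_gt0.
have hs' : s0 <= s1 by exact: ltW.
have Fe := @near01 R.
have mu e : 0 < e <= 1 -> mfou (u e).
  by move=> he; have [[m1 [m2 _]] _] := hin e he; split.
have mv : mfou v by case: hv => m1 [m2 _]; split.
have C0 : 0 <= C.
  have h1 : (0:R) < (1:R) <= (1:R) by rewrite ltr01 lexx.
  have [h _] := hC 1 h1.
  by rewrite -lee_fin; exact: le_trans (Hnorm_ge0 _ _) h.
have JC1 e : 0 < e <= 1 -> (J s1 (u e) <= (C ^+ 2)%:E)%E.
  move=> he; rewrite -Hnorm_J; apply/(sq_le_equiv (Hnorm_ge0 _ _) C0).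
  by case: (hC e he).
have S0 := (@HJ_small R R (0:R)^'+ (at_right_proper_filter 0) d s0 (fun e => fsub (u e) v)).1 hcv.
split.
- move=> h1.
  have S1 := (@HJ_small R R (0:R)^'+ (at_right_proper_filter 0) d s1 (fun e => fsub (u e) v)).1 h1.
  have Jv1 : (J s1 v < +oo)%E.
    have [e [he hJ]] := ex_near01 Fe (S1 1 ltr01).
    have le := @J_le3 R d s1 v s1 s1 s1 (fsub (u e) v) (u e) v 2 2 0 (ler0n _ 2) (ler0n _ 2) (lexx _)
      mv (mfou_sub (mu e he) mv) (mu e he) mv.
    have {}le : (J s1 v <= 2%:E * J s1 (fsub (u e) v) + 2%:E * J s1 (u e) + 0%:E * J s1 v)%E.
      apply: le; apply: nearW => x; rewrite mul0r addr0; exact: G_sub3.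
    apply: le_lt_trans (le_trans le _) (ltry ((2 * 1 + 2 * C ^+ 2 + 0 * 0))).
    rewrite !EFinD; apply: leeD; first apply: leeD.
    + exact: emul_le.
    + apply: emul_le => //; exact: JC1.
    + by rewrite mul0e mul0r.
  pose a e := fine (J s0 (fsub (u e) v)).
  pose r e := a e + e.
  pose w e := (Num.sqrt (Num.sqrt (r e)))^-1.
  pose Th e := w e `^ (s1 - s0)^-1.
  have a0 e : 0 <= a e by apply: fine_ge0; exact: J_ge0.
  have Rsm : forall eta, 0 < eta -> \forall e \near (0:R)^'+,
      [/\ 0 < e <= 1, 0 < r e, r e <= eta & J s0 (fsub (u e) v) = (a e)%:E].
    move=> eta et.
    have et2 : 0 < eta / 2 by rewrite divr_gt0.
    apply: filterS3 Fe (S0 _ et2) (nbhs_right_le et2) => e he hJ hle.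
    have Jfin : J s0 (fsub (u e) v) \is a fin_num.
      by rewrite ge0_fin_numE ?J_ge0 // (le_lt_trans hJ (ltry _)).
    have hae : a e <= eta / 2 by rewrite -lee_fin /a fineK.
    have ep : 0 < e by case/andP: he.
    have := a0 e.
    split => //; [rewrite /r; lra|rewrite /r; lra|by rewrite /a fineK].
  have Thpos e : 0 < e -> 0 < Th e.
    move=> ep; apply: powR_gt0; rewrite invr_gt0 !sqrtr_gt0 /r.
    by have := a0 e; lra.
  have ThToo : Th e @[e --> 0^'+] --> +oo.
    apply/cvgryPge => M.
    set M' := Num.max M 1.
    have M'0 : 0 < M' by rewrite lt_max ltr01 orbT.
    set k := (M' `^ (s1 - s0))^-1.
    have k0 : 0 < k by rewrite invr_gt0 powR_gt0.
    apply: filterS (Rsm (k ^+ 4) (exprn_gt0 _ k0)) => e [he rp rle _].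
    have hq : Num.sqrt (Num.sqrt (r e)) <= k := sqrt4_le (ltW rp) k0 rle.
    have hq0 : 0 < Num.sqrt (Num.sqrt (r e)) by rewrite !sqrtr_gt0.
    have hw : M' `^ (s1 - s0) <= w e.
      rewrite /w -[M' `^ (s1 - s0)]invrK lef_pV2 ?posrE ?invr_gt0 //; exact: powR_gt0.
    have MM : M <= M' by rewrite le_max lexx.
    apply: (le_trans MM).
    have -> : M' = (M' `^ (s1 - s0)) `^ (s1 - s0)^-1.
      by rewrite -powRrM mulfV ?gt_eqF // powRr1 // ltW.
    apply: ge0_ler_powR => //; first by rewrite invr_ge0 ltW.
      by rewrite nnegrE powR_ge0.
    by rewrite nnegrE (le_trans _ hw) // powR_ge0.
  have Thge := (@cvgryPge R R (0:R)^'+ (at_right_proper_filter 0) Th).1 ThToo.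
  exists Th; split; [|split; [exact: ThToo|split]].
  + by move=> e /andP[ep _]; exact: Thpos e ep.
  + apply/(@Prod_small R R (0:R)^'+ (at_right_proper_filter 0) d s0 (fun e => Th e `^ (s1 - s0))
        (fun e => fsub (u e) v)); first by move=> t; exact: powR_ge0.
    move=> eps ep.
    apply: filterS (Rsm (eps ^+ 2) (exprn_gt0 _ ep)) => e [he rp rle hJ].
    have ep' : 0 < e by case/andP: he.
    have ThW : Th e `^ (s1 - s0) = w e.
      by rewrite /Th -powRrM mulVf ?gt_eqF // powRr1 // invr_ge0 sqrtr_ge0.
    rewrite ThW hJ -EFinM lee_fin.
    apply: le_trans (key_prod (a0 e) ep') _.
    rewrite -/(r e) -(ger0_norm (ltW ep)) -sqrtr_sqr ler_sqrt ?sqr_ge0 //.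
  + apply/(@HJ_small R R (0:R)^'+ (at_right_proper_filter 0) d s1 (fun e => hicut (Th e) (u e))).
    move=> eps ep.
    have ep4 : 0 < eps / 4 by rewrite divr_gt0.
    have [M hM] := tail_small mv Jv1 ep4.
    apply: filterS3 Fe (S1 _ ep4) (Thge M) => e he hJ hMe.
    have le := @J_le3 R d s1 (hicut (Th e) (u e)) s1 s1 s1 (fsub (u e) v) (hicut (Th e) v) v
      2 2 0 (ler0n _ 2) (ler0n _ 2) (lexx _)
      (mfou_hicut _ (mu e he)) (mfou_sub (mu e he) mv) (mfou_hicut _ mv) mv.
    have {}le : (J s1 (hicut (Th e) (u e)) <=
        2%:E * J s1 (fsub (u e) v) + 2%:E * J s1 (hicut (Th e) v) + 0%:E * J s1 v)%E.
      apply: le; apply: nearW => x; rewrite mul0r addr0 !G_hicut.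
      case: ifP => _; first exact: G_sub2.
      by rewrite addr_ge0 // mulr_ge0 // sqr_ge0.
    apply: le_trans le _.
    apply: (@le_trans _ _ ((2 * (eps / 4) + 2 * (eps / 4) + 0 * 0)%:E)); last first.
      by rewrite lee_fin; lra.
    rewrite !EFinD; apply: leeD; first apply: leeD.
    + exact: emul_le.
    + apply: emul_le => //; exact: hM.
    + by rewrite mul0e mul0r.
- move=> [Th [hpos [hToo [hprod hhi]]]].
  have SP := (@Prod_small R R (0:R)^'+ (at_right_proper_filter 0) d s0 (fun e => Th e `^ (s1 - s0))
        (fun e => fsub (u e) v) (fun t => powR_ge0 _ _)).1 hprod.
  have SH := (@HJ_small R R (0:R)^'+ (at_right_proper_filter 0) d s1 (fun e => hicut (Th e) (u e))).1 hhi.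
  have Thge := (@cvgryPge R R (0:R)^'+ (at_right_proper_filter 0) Th).1 hToo.
  have Jv1 : (J s1 v < +oo)%E.
    apply: (@le_lt_trans _ _ ((2 * C ^+ 2 + 2)%:E)); last exact: ltry.
    apply: (low_bound (K := ((2 * C ^+ 2 + 2)%:E)) mv) => n.
    set c2 := (n%:R `^ (s1 - s0)) ^+ 2.
    have c20 : 0 <= c2 := sqr_ge0 _.
    have c21 : 0 < c2 + 1 by lra.
    have et : 0 < (c2 + 1)^-1 by rewrite invr_gt0.
    have [e [he hJ]] := ex_near01 Fe (S0 _ et).
    have le := @J_le3 R d s1 (locut n%:R v) s1 s0 s1 (u e) (fsub (u e) v) v 2 (2 * c2) 0
      (ler0n _ 2) (mulr_ge0 (ler0n _ 2) c20) (lexx _)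
      (mfou_locut _ mv) (mu e he) (mfou_sub (mu e he) mv) mv.
    have {}le : (J s1 (locut n%:R v) <=
        2%:E * J s1 (u e) + (2 * c2)%:E * J s0 (fsub (u e) v) + 0%:E * J s1 v)%E.
      apply: le; apply: ae_pos_imp => x xp.
      rewrite mul0r addr0 G_locut; case: ifPn => hx.
        have h1 := G_sub3 s1 (u e) v x.
        have h2 := G_weight (fsub (u e) v) hs' xp (ltW hx).
        rewrite -/c2 in h2.
        lra.
      by rewrite addr_ge0 // mulr_ge0 // ?sqr_ge0 ?mulr_ge0 // sqr_ge0.
    apply: le_trans le _.
    apply: (@le_trans _ _ ((2 * C ^+ 2 + (2 * c2) * (c2 + 1)^-1 + 0 * 0)%:E)).
      rewrite !EFinD; apply: leeD; first apply: leeD.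
      + apply: emul_le => //; exact: JC1.
      + by apply: emul_le => //; exact: mulr_ge0.
      + by rewrite mul0e mul0r.
    rewrite lee_fin.
    have : c2 * (c2 + 1)^-1 <= 1 by rewrite ler_pdivrMr // mul1r lerDl.
    lra.
  apply/(@HJ_small R R (0:R)^'+ (at_right_proper_filter 0) d s1 (fun e => fsub (u e) v)).
  move=> eps ep.
  have ep5 : 0 < eps / 5 by rewrite divr_gt0.
  have [M hM] := tail_small mv Jv1 ep5.
  have F1 : \forall e \near (0:R)^'+,
      (((Th e `^ (s1 - s0)) ^+ 2)%:E * J s0 (fsub (u e) v) <= (eps / 5)%:E)%E /\
      (J s1 (hicut (Th e) (u e)) <= (eps / 5)%:E)%E.
    by apply: filterS2 (SP _ ep5) (SH _ ep5) => e a b; split.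
  apply: filterS3 Fe F1 (Thge M) => e he [hP hH] hMe.
  have ThP : 0 < Th e := hpos e he.
  have le := @J_le3 R d s1 (fsub (u e) v) s0 s1 s1 (fsub (u e) v) (hicut (Th e) (u e)) (hicut (Th e) v)
      ((Th e `^ (s1 - s0)) ^+ 2) 2 2 (sqr_ge0 _) (ler0n _ 2) (ler0n _ 2)
      (mfou_sub (mu e he) mv) (mfou_sub (mu e he) mv) (mfou_hicut _ (mu e he)) (mfou_hicut _ mv).
  have {}le : (J s1 (fsub (u e) v) <=
      ((Th e `^ (s1 - s0)) ^+ 2)%:E * J s0 (fsub (u e) v) + 2%:E * J s1 (hicut (Th e) (u e))
      + 2%:E * J s1 (hicut (Th e) v))%E.
    apply: le; apply: ae_pos_imp => x xp.
    rewrite !G_hicut; case: (leP (Th e) (eucl x)) => hx.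
      have h1 := G_sub1 s1 (u e) v x.
      have h2 : 0 <= (Th e `^ (s1 - s0)) ^+ 2 * Gs s0 (fsub (u e) v) x ^+ 2.
        by rewrite mulr_ge0 // sqr_ge0.
      lra.
    have h2 := G_weight (fsub (u e) v) hs' xp (ltW hx).
    lra.
  apply: le_trans le _.
  apply: (@le_trans _ _ ((eps / 5 + 2 * (eps / 5) + 2 * (eps / 5))%:E)); last first.
    by rewrite lee_fin; lra.
  rewrite !EFinD; apply: leeD; [apply: leeD|] => //; apply: emul_le => //.
  exact: hM.
Qed.
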